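(* Let $X$ be an extensible marked Dynkin diagram with $d$ nodes and let $\Delta$ be the common difference of $\{\det(X_n)\}_{n\ge d}$. Then there exists a sequence of integers $(a_i)_{i\ge1}$, depending only on $X$ and its node numbering, such that in $P(X_n)$ $$(-\Delta)\,\omega_i^{(n)}\equiv a_i\,\overline{\omega}_1^{(n)}\pmod{Q(X_n)}$$ for all $i=1,\dots,n$ and for all $n\ge d$ such that $\det(X_n)\ne0$. Moreover, the $a_i$ are the unique integers with this property.
   Context: A marked Dynkin diagram $X$ has nodes $1,\dots,d$ with node $d$ distinguished and symmetrizable generalized Cartan matrix $C(X)$. For $n\ge d$, $X_n$ is obtained by attaching a simply-laced chain of new nodes $d+1,\dots,n$ to node $d$ (so $C(X_n)$ has $C(X)$ as upper-left block, $2$ on the remaining diagonal, $-1$ in positions $(i,i+1),(i+1,i)$ for $d\le i<n$, $0$ elsewhere). $\det(Y)$ is the determinant of the generalized Cartan matrix of $Y$. $X$ is extensible if $\Delta\ne0$, $\det(X)\ne0$ and $\gcd(\Delta,\det X)=1$. For $\mathfrak g(X_n)$: simple roots $\alpha_i^{(n)}$, coroots $\check\alpha_i^{(n)}$ with $\alpha_j^{(n)}(\check\alpha_i^{(n)})=C(X_n)_{ij}$, root lattice $Q(X_n)$, weight lattice $P(X_n)$, fundamental weights $\omega_i^{(n)}$ with $\omega_i^{(n)}(\check\alpha_j^{(n)})=\delta_{ij}$, and $\overline{\omega}_i^{(n)}=\omega_{n-i+1}^{(n)}$. *)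

(* Defs.v *)
From HB Require Import structures.
From mathcomp Require Import all_boot all_order all_algebra.
Set Implicit Arguments. Unset Strict Implicit. Unset Printing Implicit Defensive.
Import Order.TTheory GRing.Theory Num.Theory.
Local Open Scope ring_scope.

(* A marked Dynkin diagram X with d nodes is given by its generalized Cartan
   matrix A : 'M[int]_d; nodes 1..d are the indices 0..d-1, the distinguished
   node d is the index d-1. *)

Definition is_GCM (d : nat) (A : 'M[int]_d) : Prop :=
  (forall i, A i i = 2) /\
  (forall i j, i != j -> A i j <= 0) /\
  (forall i j, (A i j == 0) = (A j i == 0)).

Definition symmetrizable (d : nat) (A : 'M[int]_d) : Prop :=
  exists D : 'I_d -> rat, (forall i, 0 < D i) /\
    (forall i j, D i * (A i j)%:~R = D j * (A j i)%:~R).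

(* C(X_n): attach a simply-laced chain d+1..n to node d (used for n >= d) *)
Definition ext_mx (d : nat) (A : 'M[int]_d) (n : nat) : 'M[int]_n :=
  \matrix_(i < n, j < n)
    match (insub (val i) : option 'I_d), (insub (val j) : option 'I_d) with
    | Some i', Some j' => A i' j'
    | _, _ => if i == j then 2
              else if ((val i).+1 == val j) || ((val j).+1 == val i) then -1
              else 0
    end.

Definition detX (d : nat) (A : 'M[int]_d) (n : nat) : int := \det (ext_mx A n).

(* Delta: the common difference of the arithmetic sequence (det X_n)_{n >= d} *)
Definition Delta (d : nat) (A : 'M[int]_d) : int := detX A d.+1 - detX A d.

Definition extensible (d : nat) (A : 'M[int]_d) : Prop :=
  Delta A != 0 /\ \det A != 0 /\ gcdz (Delta A) (\det A) = 1.

(* Weights of g(X_n) written in the basis of fundamental weights omega_i^(n):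
   omega_i is the i-th unit column vector.  The simple root alpha_j has
   coordinates alpha_j(check alpha_i) = C_{ij}, i.e. it is the j-th column of
   C(X_n); hence Q(X_n) = C(X_n) *m Z^n. *)
Definition omega (n : nat) (i : 'I_n) : 'cV[int]_n := delta_mx i 0.

Definition congr_Q (d : nat) (A : 'M[int]_d) (n : nat) (v w : 'cV[int]_n) : Prop :=
  exists c : 'cV[int]_n, v - w = ext_mx A n *m c.

(* the property of the sequence a (indexed by i = 1, 2, ...):
   (-Delta) omega_i^(n) = a_i omegabar_1^(n) mod Q(X_n), omegabar_1^(n) = omega_n^(n) *)
Definition weight_congr_prop (d : nat) (A : 'M[int]_d) (a : nat -> int) : Prop :=
  forall n : nat, (d <= n)%N -> detX A n != 0 ->
    forall (i : 'I_n) (Hn : (n.-1 < n)%N),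
      congr_Q A ((- Delta A) *: omega i) (a (val i).+1 *: omega (Ordinal Hn)).

(* Main.v *)
Require Import Defs.
From HB Require Import structures.
From mathcomp Require Import all_boot all_order all_algebra zify ring.
Import Order.TTheory GRing.Theory Num.Theory.
Local Open Scope ring_scope.
Set Implicit Arguments. Unset Strict Implicit. Unset Printing Implicit Defensive.

Section Aux.
Variable d' : nat.
Local Notation d := d'.+1.
Variable A : 'M[int]_d.

Definition Ef (k j : nat) : int :=
  if (k < d)%N && (j < d)%N then A (inord k) (inord j)
  else if k == j then 2 else if (k.+1 == j) || (j.+1 == k) then -1 else 0.

Lemma extE n (i j : 'I_n) : ext_mx A n i j = Ef i j.
Proof.
rewrite mxE /Ef; case: (insubP 'I_d (val i)) => [i' Hi Ei|Hi]; case: (insubP 'I_d (val j)) => [j' Hj Ej|Hj] /=.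
- rewrite Hi Hj /=; congr (A _ _); apply: val_inj; rewrite /= inordK // -?Ei -?Ej //.
- by rewrite (negbTE Hj) andbF.
- by rewrite (negbTE Hi).
- by rewrite (negbTE Hi).
Qed.

Lemma ext_d : ext_mx A d = A.
Proof.
apply/matrixP => i j; rewrite extE /Ef !ltn_ord /=.
by rewrite !inord_val.
Qed.

Lemma ext_rc m : row' ord_max (col' ord_max (ext_mx A m.+1)) = ext_mx A m.
Proof.
apply/matrixP => i j; rewrite [LHS]mxE [LHS]mxE !extE /=.
by rewrite /bump !(leqNgt m) !ltn_ord !add0n.
Qed.

Lemma inord_max : (inord d' : 'I_d) = ord_max.
Proof. by apply: val_inj; rewrite /= inordK. Qed.

Lemma sum_delta (m n c : nat) (F : nat -> int) :
  \sum_(m <= j < n) (if j == c then F j else 0) = if (m <= c < n)%N then F c else 0.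
Proof.
elim: n => [|n IH]; first by rewrite big_geq // ltn0 andbF.
case: (leqP m n) => Hmn.
  rewrite big_nat_recr //= IH.
  case: ifP => H1; case: (eqVneq n c) => H2; case: ifP => H3; subst;
    rewrite ?addr0 ?add0r //; lia.
rewrite big_geq //; case: ifP => //; lia.
Qed.


Ltac crush := repeat (case: ifP => /= ?); try lia;
  rewrite ?mulN1r ?mul1r ?mul0r ?mulr0 ?addr0 ?add0r ?subr0; try lia.

Lemma row_lemma n (Hn : (d <= n)%N) (z : 'cV[int]_d) (h : nat -> int) (k : 'I_n) :
  (ext_mx A n *m \col_(j < n) (if (j < d)%N then z (inord j) 0 else h j)) k 0 =
  if (k < d)%N then (A *m z) (inord k) 0 - (if (k == d' :> nat) && (d < n)%N then h d else 0)
  else 2 * h k - (if k == d :> nat then z ord_max 0 else h k.-1)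
       - (if (k.+1 < n)%N then h k.+1 else 0).
Proof.
rewrite mxE.
under eq_bigr do rewrite extE mxE.
rewrite -(big_mkord xpredT (fun j : nat => Ef k j * (if (j < d)%N then z (inord j) 0 else h j))).
have Hk := ltn_ord k.
case: ifP => Hkd.
  rewrite (big_cat_nat _ (n := d)) //=.
  congr (_ + _).
    rewrite mxE big_mkord; apply: eq_bigr => j _.
    by rewrite /Ef Hkd ltn_ord /= !inord_val.
  rewrite (eq_big_nat _ _ (F2 := fun j => if j == k.+1 then - h j else 0)); last first.
    by move=> j /andP[H1 H2]; rewrite /Ef; crush.
  rewrite sum_delta; case: ifP => H1; case: ifP => H2; try lia.
  by case/andP: H2 => /eqP ->.
rewrite (eq_big_nat _ _ (F2 := fun j => (if j == k then 2 * h j else 0)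
   - (if j == k.+1 then h j else 0)
   - (if j == k.-1 then (if (j < d)%N then z (inord j) 0 else h j) else 0))); last first.
  move=> j /andP[H1 H2]; rewrite /Ef Hkd /=.
  case: (eqVneq j k) => [->|Hjk]; first by crush.
  case: (eqVneq j k.+1) => [->|Hjk1]; first by crush.
  case: (eqVneq j k.-1) => [->|Hjk2]; first by crush.
  by crush.
rewrite !big_split /= !sumrN !sum_delta /=.
rewrite Hk.
case: (eqVneq (k : nat) d) => [Ekd|Ekd].
  rewrite Ekd /= ltnSn inord_max; crush.
crush.
Qed.


Lemma rcE T m (M : 'M[T]_m.+1) i0 j0 i j : row' i0 (col' j0 M) i j = M (lift i0 i) (lift j0 j).
Proof. by rewrite !mxE. Qed.

Lemma det_rec m : (d <= m.+1)%N -> detX A m.+2 = 2 * detX A m.+1 - detX A m.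
Proof.
move=> Hm.
rewrite /detX (expand_det_row _ ord_max) big_ord_recr big_ord_recr /=.
rewrite big1 ?add0r; last first.
  move=> j _; have Hj := ltn_ord j; rewrite extE /Ef /=; crush.
rewrite !extE /Ef /=.
idtac.
rewrite /= !eqxx (gtn_eqF (ltnSn m)) orbT /=.
rewrite {2}/cofactor ext_rc /= -signr_odd addnn odd_double expr0 mul1r.
have -> : (m.+1 < d)%N = false by lia.
rewrite /= /cofactor /= -signr_odd /= addnn odd_double /= expr1.
rewrite (expand_det_col _ ord_max) big_ord_recr /=.
rewrite big1 ?add0r; last first.
  move=> j _; rewrite rcE extE /Ef /= /bump.
  have Hj := ltn_ord j. crush.
rewrite rcE extE /Ef /= /bump /= ltnn leqnn /= add0n add1n.
have -> : (m < d)%N && (m.+1 < d)%N = false by lia.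
rewrite /= (ltn_eqF (ltnSn m)) eqxx /=.
rewrite /cofactor /= -signr_odd addnn odd_double expr0 mul1r.
have -> : row' ord_max (col' ord_max (row' ord_max (col' (widen_ord (leqnSn m.+1) ord_max) (ext_mx A m.+2)))) = ext_mx A m.
  apply/matrixP => i j; rewrite !rcE !extE /= /bump.
  have Hi := ltn_ord i; have Hj := ltn_ord j.
  have Hi' : (i < m)%N := Hi; have Hj' : (j < m)%N := Hj.
  have -> : (m <= i)%N = false by lia.
  have -> : (m <= j)%N = false by lia.
  have -> : (m < i)%N = false by lia.
  by rewrite /= ?add0n leqNgt Hj.
set x := \det (ext_mx A m); set y := \det (ext_mx A m.+1). rewrite !mulNr !mul1r opprK. lia.
Qed.


Local Notation detA' := (\det (ext_mx A d')).

Lemma detX_d : detX A d = \det A.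
Proof. by rewrite /detX ext_d. Qed.

Lemma Delta_eq : Delta A = \det A - detA'.
Proof.
rewrite /Delta (det_rec (leqnn _)) detX_d /detX.
set x := \det A; set y := \det (ext_mx A d'). lia.
Qed.

Lemma det_prog k : detX A (d + k) = \det A + k%:Z * Delta A.
Proof.
suff: detX A (d + k) = \det A + k%:Z * Delta A /\
      detX A (d + k.+1) = \det A + k.+1%:Z * Delta A by case.
elim: k => [|k [IH1 IH2]].
  rewrite addn0 detX_d addn1 /Delta detX_d.
  set x := \det A; set y := detX A d.+1. lia.
split => //.
rewrite addnS addnS det_rec; last by lia.
rewrite -addnS IH2 IH1.
set x := \det A; set y := Delta A. lia.
Qed.

Lemma adj_max : \adj A ord_max ord_max = detA'.
Proof.
rewrite mxE /cofactor -{1}ext_d ext_rc /= -signr_odd addnn odd_double expr0.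
by rewrite mul1r.
Qed.

Lemma AadjE (k j : 'I_d) : (A *m \adj A) k j = \det A *+ (k == j).
Proof. by rewrite mul_mx_adj mxE. Qed.


Lemma A'E (k j : 'I_d') : ext_mx A d' k j = A (widen_ord (leqnSn d') k) (widen_ord (leqnSn d') j).
Proof.
rewrite extE /Ef; have Hk := ltn_ord k; have Hj := ltn_ord j.
have -> : (k < d)%N by lia. have -> : (j < d)%N by lia.
by congr (A _ _); apply: val_inj; rewrite /= inordK //; lia.
Qed.

Lemma Xsol (i : 'I_d') : coprimez (\det A) detA' -> \det A != 0 ->
  let a := \adj A ord_max (widen_ord (leqnSn d') i) in
  exists z : 'cV[int]_d,
    A *m z = (- Delta A) *: delta_mx (widen_ord (leqnSn d') i) 0 - a *: delta_mx ord_max 0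
    /\ z ord_max 0 = - a.
Proof.
move=> cop nz a.
set w := (- Delta A) *: delta_mx (widen_ord (leqnSn d') i) 0 - a *: delta_mx ord_max 0.
set Z := \adj A *m w.
have AZ : A *m Z = \det A *: w by rewrite /Z mulmxA mul_mx_adj mul_scalar_mx.
have Zmax : Z ord_max 0 = - a * \det A.
  have Ea : a = cofactor A (widen_ord (leqnSn d') i) ord_max by rewrite /a mxE.
  have Em : cofactor A ord_max ord_max = detA' by rewrite -adj_max mxE.
  rewrite /Z /w mulmxBr -!scalemxAr -!colE !mxE -Ea Em Delta_eq.
  set x := \det A. nia.
set Zp : 'cV[int]_d' := \col_k Z (widen_ord (leqnSn d') k) 0.
set V : 'cV[int]_d' := \col_k (w (widen_ord (leqnSn d') k) 0 + A (widen_ord (leqnSn d') k) ord_max * a).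
have C1 : ext_mx A d' *m Zp = \det A *: V.
  apply/matrixP => k l; rewrite (ord1 l) [LHS]mxE [RHS]mxE [V k 0]mxE.
  have := congr1 (fun M : 'M[int]_(d,1) => M (widen_ord (leqnSn d') k) 0) AZ.
  rewrite [LHS]mxE [RHS]mxE big_ord_recr /= Zmax => H.
  have -> : \sum_(j < d') ext_mx A d' k j * Zp j 0 =
            \sum_(j < d') A (widen_ord (leqnSn d') k) (widen_ord (leqnSn d') j) * Z (widen_ord (leqnSn d') j) 0.
    by apply: eq_bigr => j _; rewrite A'E mxE.
  move: H; set s := \sum_(_ < _) _; set u := w _ _; set b := A _ _.
  set x := \det A. nia.
have C2 : detA' *: Zp = \det A *: (\adj (ext_mx A d') *m V).
  by rewrite scalemxAr -C1 mulmxA mul_adj_mx mul_scalar_mx.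
have dv : forall j : 'I_d, (\det A %| Z j ord0)%Z.
  move=> j; have [Hj|Hj] := ltnP j d'.
    have -> : j = widen_ord (leqnSn d') (Ordinal Hj) by apply: val_inj.
    have := congr1 (fun M : 'M[int]_(d',1) => M (Ordinal Hj) ord0) C2; rewrite !mxE => H.
    rewrite -(Gauss_dvdzr _ cop) H; exact: dvdz_mulr.
  have -> : j = ord_max by apply: val_inj => /=; have := ltn_ord j; lia.
  by rewrite Zmax dvdz_mull.
set zz := \col_j ((Z j ord0) %/ \det A)%Z.
exists zz.
split; last by rewrite mxE Zmax mulzK.
have E : \det A *: zz = Z.
  apply/matrixP => j l; rewrite (ord1 l) [LHS]mxE [X in _ * X]mxE mulrC (divzK (dv j)) //.
have H : \det A *: (A *m zz) = \det A *: w by rewrite scalemxAr E AZ.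
apply/matrixP => k l.
have := congr1 (fun M : 'M[int]_(d,1) => M k l) H.
rewrite [LHS]mxE [RHS]mxE.
exact: (mulfI nz).
Qed.


Definition aseq (m : nat) : int :=
  if (m.-1 < d')%N then \adj A ord_max (inord m.-1)
  else \det A + (m.-1%:Z - d%:Z) * Delta A.

Lemma exist_part (HA : coprimez (\det A) detA') (nz : \det A != 0) n (Hn : (d <= n)%N)
  (i : 'I_n) (Hn' : (n.-1 < n)%N) :
  congr_Q A ((- Delta A) *: omega i) (aseq (val i).+1 *: omega (Ordinal Hn')).
Proof.
rewrite /aseq /=; case: ifP => Hi.
  have -> : (inord i : 'I_d) = widen_ord (leqnSn d') (Ordinal Hi) by apply: val_inj; rewrite /= inordK //; lia.
  have [z [Az zmax]] := Xsol (Ordinal Hi) HA nz.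
  set a := \adj A _ _ in Az zmax *.
  exists (\col_(j < n) (if (j < d)%N then z (inord j) 0 else - a)).
  apply/matrixP => k l; rewrite (ord1 l) (row_lemma Hn z (fun _ => - a)) Az zmax.
  rewrite !mxE !eqxx !andbT -!val_eqE /=.
  have Hk := ltn_ord k.
  case: ifP => Hkd; rewrite ?inordK //= !mulr_natr !mulrb; crush.
set z : 'cV[int]_d := \col_j (- \adj A j ord_max).
have Az : forall k : 'I_d, (A *m z) k 0 = - (\det A *+ (k == ord_max)).
  move=> k; rewrite -AadjE !mxE -sumrN; apply: eq_bigr => j _.
  by rewrite !mxE mulrN.
have zmax : z ord_max 0 = - detA' by rewrite mxE adj_max.
exists (\col_(j < n) (if (j < d)%N then z (inord j) 0
          else - detA' - ((minn j i)%:Z - d'%:Z) * Delta A)).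
apply/matrixP => k l; rewrite (ord1 l) (row_lemma Hn z (fun j => - detA' - ((minn j i)%:Z - d'%:Z) * Delta A)) Az zmax.
have HD := Delta_eq.
rewrite !mxE !eqxx !andbT -!val_eqE /=.
have Hk := ltn_ord k; have Hii := ltn_ord i.
case: ifP => Hkd; rewrite ?inordK //= ?mulr_natr ?mulrb.
  have [Hid|Hid] := eqVneq (i : nat) d'.
    rewrite Hid (minn_idPr (leqnSn d')) HD; repeat (case: ifP => /= ?); try (case: (lerP 0 (\det A - detA')) => ?; nia).
  rewrite (minn_idPl (_ : d <= i)%N); last by lia.
  rewrite HD; repeat (case: ifP => /= ?); try (case: (lerP 0 (\det A - detA')) => ?; nia).
rewrite HD; case: (ltngtP k i) => Hki.
- have E1 : minn k.-1 i = k.-1 by apply/minn_idPl; lia.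
  have E2 : minn k.+1 i = k.+1 by apply/minn_idPl; lia.
  rewrite E1 E2; repeat (case: ifP => /= ?); try (case: (lerP 0 (\det A - detA')) => ?; nia).
- have E1 : minn k.-1 i = i by apply/minn_idPr; lia.
  have E2 : minn k.+1 i = i by apply/minn_idPr; lia.
  rewrite E1 E2; repeat (case: ifP => /= ?); try (case: (lerP 0 (\det A - detA')) => ?; nia).
- have E1 : minn k.-1 i = k.-1 by apply/minn_idPl; lia.
  have E2 : minn k.+1 i = i by apply/minn_idPr; lia.
  rewrite E1 E2; repeat (case: ifP => /= ?); try (case: (lerP 0 (\det A - detA')) => ?; nia).
Qed.


Lemma uniq_part (Hg : gcdz (Delta A) (\det A) = 1) (HD0 : Delta A != 0) (a b : nat -> int) :
  weight_congr_prop A a -> weight_congr_prop A b -> forall i, (0 < i)%N -> b i = a i.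
Proof.
move=> Ha Hb i Hi.
set c := a i - b i.
set k := (i.-1 + absz c + absz (\det A))%N.
set n := (d + k).+1.
have Hdn : (d <= n)%N by rewrite /n; lia.
have Edet : detX A n = \det A + k.+1%:Z * Delta A by rewrite /n -addnS det_prog.
have Edet' : detX A (d + k) = \det A + k%:Z * Delta A by rewrite det_prog.
have HD1 : (1 <= absz (Delta A))%N by rewrite absz_gt0.
have Hlt : (absz c < absz (detX A n))%N.
  rewrite Edet /k; nia.
have Hnz : detX A n != 0 by rewrite -absz_eq0; lia.
have Him : (i.-1 < n)%N by rewrite /n /k; lia.
have Hn' : (n.-1 < n)%N by [].
have [x1 E1] := Ha n Hdn Hnz (Ordinal Him) Hn'.
have [x2 E2] := Hb n Hdn Hnz (Ordinal Him) Hn'.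
rewrite /= prednK // in E1 E2.
have E : c *: omega (Ordinal Hn') = ext_mx A n *m (x2 - x1).
  rewrite mulmxBr -E1 -E2.
  apply/matrixP => p q; rewrite !mxE /c.
  set u := (_ %:R); set v := (_ %:R). lia.
have F := congr1 (fun N : 'M[int]_(n, 1) => (\adj (ext_mx A n) *m N) ord_max 0) E.
rewrite /= -scalemxAr mulmxA mul_adj_mx mul_scalar_mx /omega -colE in F.
have Eo : Ordinal Hn' = ord_max by apply: val_inj.
rewrite Eo in F.
rewrite !mxE /cofactor ext_rc -signr_odd addnn odd_double expr0 mul1r in F.
have cop : coprimez (detX A n) (detX A (d + k)).
  rewrite /coprimez Edet Edet' gcdzC.
  have -> : \det A + k.+1%:Z * Delta A = (\det A + k%:Z * Delta A) + Delta A.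
    set x := Delta A; set y := \det A. lia.
  rewrite gcdzDl gcdzC.
  have -> : \det A + k%:Z * Delta A = k%:Z * Delta A + \det A by rewrite addrC.
  by rewrite gcdzMDl Hg.
have dv : (detX A n %| c * detX A (d + k))%Z.
  by rewrite /detX F dvdz_mulr.
rewrite (Gauss_dvdzl _ cop) dvdzE in dv.
case: (posnP (absz c)) => Hc.
  move/eqP: Hc; rewrite absz_eq0 /c subr_eq0 => /eqP ->. by [].
have := dvdn_leq Hc dv. lia.
Qed.

End Aux.

Theorem proposition3p3 (d : nat) (A : 'M[int]_d) :
  (0 < d)%N -> is_GCM A -> symmetrizable A -> extensible A ->
  exists a : nat -> int,
    weight_congr_prop A a /\
    (forall b : nat -> int, weight_congr_prop A b ->
       forall i : nat, (0 < i)%N -> b i = a i).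
Proof.
case: d A => [|d'] A // _ _ _ [HD0 [Hdet Hg]].
have cop : coprimez (\det A) (\det (ext_mx A d')).
  have -> : \det (ext_mx A d') = 1 * \det A + - Delta A.
    rewrite Delta_eq; set x := \det A; set y := \det _. lia.
  by rewrite /coprimez gcdzMDl gcdzN gcdzC Hg.
have Ha : weight_congr_prop A (aseq A).
  move=> n Hn _ i Hn'; exact: exist_part.
exists (aseq A); split => //.
move=> b Hb i Hi; exact: (uniq_part Hg HD0 Ha Hb).
Qed.
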